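(* Let $\mathcal{H}$ be a real Hilbert space, $\rho\in\mathbb{R}$, and let $\mathcal{A}:\mathcal{H}\to 2^{\mathcal{H}}$ be a maximally $\rho$-comonotone operator. Let $\eta>\max\{-2\rho,0\}$ and let $x:\mathbb{R}\supseteq I\to\mathcal{H}$ be a differentiable function (such that $t\mapsto \mathcal{A}_\eta(x(t))$ is differentiable). Then $$\Big\langle \dot{x}(t), \frac{d}{dt}\mathcal{A}_{\eta}(x(t))\Big\rangle \geq 0 .$$
   Context: An operator $\mathcal{A}:\mathcal{H}\to 2^{\mathcal{H}}$ is $\rho$-comonotone if $\langle x-y,u-v\rangle\ge \rho\|u-v\|^2$ for all $(x,u),(y,v)$ in the graph $\mathrm{gra}\,\mathcal{A}=\{(x,u): u\in\mathcal{A}x\}$; it is maximally $\rho$-comonotone if it is $\rho$-comonotone and no other $\rho$-comonotone operator has a graph properly containing $\mathrm{gra}\,\mathcal{A}$. The resolvent of $\mathcal{A}$ with index $\eta>0$ is $J^{\mathcal{A}}_\eta=(\mathrm{Id}+\eta\mathcal{A})^{-1}$ and the Yosida regularization is $\mathcal{A}_\eta=\frac{1}{\eta}(\mathrm{Id}-J^{\mathcal{A}}_\eta)$. For $\mathcal{A}$ maximally $\rho$-comonotone and $\eta>\max\{-2\rho,0\}$, $J^{\mathcal{A}}_\eta$ and $\mathcal{A}_\eta$ are single-valued everywhere-defined operators $\mathcal{H}\to\mathcal{H}$. *)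

(* Defs.v *)
From HB Require Import structures.
From mathcomp Require Import all_boot all_order all_algebra.
From mathcomp Require Import all_classical all_reals all_analysis.
Set Implicit Arguments. Unset Strict Implicit. Unset Printing Implicit Defensive.
Import Order.TTheory GRing.Theory Num.Theory.
Import numFieldNormedType.Exports.
Local Open Scope classical_set_scope.
Local Open Scope ring_scope.

(* A real Hilbert space is represented by a complete normed R-module V together
   with an inner product inducing its norm. *)
Definition is_inner_product (R : realType) (V : normedModType R)
  (inner : V -> V -> R) : Prop :=
  [/\ (forall x y, inner x y = inner y x),
      (forall a x y z, inner (a *: x + y) z = a * inner x z + inner y z)
    & (forall x, inner x x = `|x| ^+ 2)].

(* Set-valued operators A : V -> 2^V are modelled as V -> set V;
   u \in A x is written A x u. *)
Definition comonotone (R : realType) (V : normedModType R)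
  (inner : V -> V -> R) (rho : R) (A : V -> set V) : Prop :=
  forall x y u v, A x u -> A y v -> inner (x - y) (u - v) >= rho * `|u - v| ^+ 2.

Definition maximally_comonotone (R : realType) (V : normedModType R)
  (inner : V -> V -> R) (rho : R) (A : V -> set V) : Prop :=
  comonotone inner rho A /\
  forall B : V -> set V, comonotone inner rho B ->
    (forall x u, A x u -> B x u) -> forall x u, B x u -> A x u.

(* Resolvent J_eta = (Id + eta A)^{-1} as a relation: p is a value of J_eta x
   iff x \in p + eta A p. *)
Definition resolvent_rel (R : realType) (V : normedModType R)
  (A : V -> set V) (eta : R) (x p : V) : Prop :=
  exists u, A p u /\ x = p + eta *: u.

Definition yosida_rel (R : realType) (V : normedModType R)
  (A : V -> set V) (eta : R) (x w : V) : Prop :=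
  exists p, resolvent_rel A eta x p /\ w = eta^-1 *: (x - p).

(* Main.v *)
Require Import Defs.
From HB Require Import structures.
From mathcomp Require Import all_boot all_order all_algebra.
From mathcomp Require Import all_classical all_reals all_analysis.
From mathcomp Require Import lra.
Import Order.TTheory GRing.Theory Num.Theory.
Import numFieldNormedType.Exports.
Local Open Scope classical_set_scope.
Local Open Scope ring_scope.

Lemma inner_addl {R : realType} {V : normedModType R} {inner : V -> V -> R} :
  is_inner_product inner -> forall a b z, inner (a + b) z = inner a z + inner b z.
Proof. by case=> _ hl _ a b z; rewrite -[a]scale1r hl mul1r scale1r. Qed.

Lemma inner_scalel {R : realType} {V : normedModType R} {inner : V -> V -> R} :
  is_inner_product inner -> forall k a z, inner (k *: a) z = k * inner a z.
Proof.
move=> hi k a z; have h0 : inner 0 z = 0.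
  have := inner_addl hi 0 0 z; rewrite addr0 => h.
  by apply/eqP; rewrite -(inj_eq (addrI (inner 0 z))) addr0 -h.
by case: hi => _ hl _; rewrite -[k *: a]addr0 hl h0 addr0.
Qed.
Lemma inner_polar {R : realType} {V : normedModType R} {inner : V -> V -> R} :
  is_inner_product inner -> forall a b,
  inner a b = (`|a + b| ^+ 2 - `|a - b| ^+ 2) / 4.
Proof.
move=> hi a b; have [hs _ hn] := hi.
have addr : forall u v w, inner u (v + w) = inner u v + inner u w.
  by move=> u v w; rewrite hs (inner_addl hi) (hs v) (hs w).
have scr : forall k u v, inner u (k *: v) = k * inner u v.
  by move=> k u v; rewrite hs (inner_scalel hi) hs.
rewrite -!hn.
rewrite !(inner_addl hi).
rewrite !addr.
have oppl : forall u w, inner (- u) w = - inner u w.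
  by move=> u w; rewrite -[- u]scaleN1r (inner_scalel hi) mulN1r.
have oppr : forall u w, inner w (- u) = - inner w u.
  by move=> u w; rewrite hs oppl hs.
rewrite !oppl !oppr.
rewrite (hs b a).
move: (inner a a) (inner a b) (inner b b) => p q r.
lra.
Qed.

Theorem mainTheorem1 (R : realType) (V : completeNormedModType R)
  (inner : V -> V -> R) (rho : R) (A : V -> set V) (eta : R)
  (I : set R) (x y : R -> V) :
  is_inner_product inner ->
  maximally_comonotone inner rho A ->
  Num.max (- (2 * rho)) 0 < eta ->
  open I ->
  (forall s, I s -> yosida_rel A eta (x s) (y s)) ->
  (forall s, I s -> derivable x s 1) ->
  (forall s, I s -> derivable y s 1) ->
  forall t, I t -> 0 <= inner (derive1 x t) (derive1 y t).
Proof.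
move=> hi [hc _] heta oI hy dx dy t It.
have [hs hl hn] := hi.
have eta0 : 0 < eta by move: heta; rewrite gt_max => /andP[].
have re : 0 <= rho + eta.
  by move: heta; rewrite gt_max => /andP[h1 h2]; lra.
have key : forall s, I s -> 0 <= inner (x s - x t) (y s - y t).
  move=> s Is.
  have [p [[u [Apu xs]] ys]] := hy s Is.
  have [p' [[u' [Apu' xt]] yt]] := hy t It.
  have ys' : y s = u.
    by rewrite ys xs addrAC subrr add0r scalerA mulVf ?gt_eqF // scale1r.
  have yt' : y t = u'.
    by rewrite yt xt addrAC subrr add0r scalerA mulVf ?gt_eqF // scale1r.
  rewrite ys' yt' xs xt.
  have -> : p + eta *: u - (p' + eta *: u') = eta *: (u - u') + (p - p').
    by rewrite opprD addrACA scalerBr addrC.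
  rewrite hl hn.
  have := hc _ _ _ _ Apu Apu'.
  have n0 : 0 <= `|u - u'| ^+ 2 by apply: sqr_ge0.
  have := mulr_ge0 re n0.
  lra.
pose Fx := fun h : R => h^-1 *: (x (h + t) - x t).
pose Fy := fun h : R => h^-1 *: (y (h + t) - y t).
have cx : Fx @ 0^' --> derive1 x t.
  have := dx t It; rewrite /derivable.
  have -> : (fun h : R => h^-1 *: ((x \o shift t) (h *: 1) - x t)) = Fx.
    by apply/funext => h; rewrite /Fx /= [h%:A]mulr1.
  by move=> H; exact H.
have cy : Fy @ 0^' --> derive1 y t.
  have := dy t It; rewrite /derivable.
  have -> : (fun h : R => h^-1 *: ((y \o shift t) (h *: 1) - y t)) = Fy.
    by apply/funext => h; rewrite /Fy /= [h%:A]mulr1.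
  by move=> H; exact H.
have cG : (fun h => (`|Fx h + Fy h| * `|Fx h + Fy h| - `|Fx h - Fy h| * `|Fx h - Fy h|) / 4)
   @ 0^' --> (`|derive1 x t + derive1 y t| * `|derive1 x t + derive1 y t|
              - `|derive1 x t - derive1 y t| * `|derive1 x t - derive1 y t|) / 4.
  apply: cvgM; last exact: cvg_cst.
  apply: cvgB; apply: cvgM; apply: cvg_norm; (apply: cvgD || apply: cvgB) => //; exact: cvgN.
rewrite (inner_polar hi) !expr2.
apply: (cvgr_to_ge cG).
have nI : \forall h \near 0^', I (h + t).
  apply: nbhs_dnbhs.
  have : \near t, I t by apply: open_nbhs_nbhs; split.
  move/nbhs0P; apply: filterS => h; by rewrite addrC.
near=> h.
rewrite -!expr2 -(inner_polar hi) /Fx /Fy (inner_scalel hi) hs (inner_scalel hi) hs.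
rewrite mulrA; apply: mulr_ge0; first by rewrite -expr2 sqr_ge0.
apply: key.
by near: h.
Unshelve. all: by end_near.
Qed.
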